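(* Let $R$ be a local ring, let $p(X)=\sum_{i=0}^na_iX^i\in R[X]$ be such that $p(X)/1$ is a strong divisor of the local ring $R(X)$ that is not a unit, and let $I=(a_0,\ldots,a_n)$ be the content ideal of $p(X)$. Then $I(X):=IR(X)=R(X)p(X)/1$, and $I=R\rho$ for some strong divisor $\rho$ of $R$ such that $p(X)/1\simeq\rho$ in $R(X)$. If $p(X)/1\in R(X)a_i$ for some $i$, then $I=Ra_i$. Moreover, the image of $\mathrm{Spec}(R(X)_{p(X)/1})\to\mathrm{Spec}(R)$ is $\mathrm D(I)$.
   Context: All rings are commutative with identity; ''local'' means having a unique maximal ideal. For a ring $A$, $A(X):=A[X]_{\Sigma_A}$ with $\Sigma_A=\{q\in A[X]: c(q)=A\}$, $c(q)$ the ideal generated by the coefficients; if $A$ is local, so is $A(X)$. A strong divisor of a local ring $A$ is a regular element $t$ such that $At$ is comparable under inclusion with every ideal of $A$. Two elements $x,y$ of a ring $B$ are equivalent, written $x\simeq y$, if $\mathrm D(x)=\mathrm D(y)$ in $\mathrm{Spec}(B)$ (equivalently $\sqrt{Bx}=\sqrt{By}$). $\mathrm D(I)=\{P\in\mathrm{Spec}(R): I\not\subseteq P\}$. *)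

(* Defs.v *)
From HB Require Import structures.
From mathcomp Require Import all_boot all_order all_algebra.
Set Implicit Arguments. Unset Strict Implicit. Unset Printing Implicit Defensive.
Import GRing.Theory.
Local Open Scope ring_scope.

Section Ideals.
Variable B : comNzRingType.

Definition is_ideal (I : B -> Prop) : Prop :=
  [/\ I 0, (forall x y, I x -> I y -> I (x + y)) & (forall a x, I x -> I (a * x))].

Definition ideal_eq (I J : B -> Prop) : Prop := forall x, I x <-> J x.
Definition ideal_sub (I J : B -> Prop) : Prop := forall x, I x -> J x.

Definition prime_ideal (P : B -> Prop) : Prop :=
  [/\ is_ideal P, ~ P 1 & forall x y, P (x * y) -> P x \/ P y].

Definition maximal_ideal (M : B -> Prop) : Prop :=
  [/\ is_ideal M, ~ M 1 &
      forall J, is_ideal J -> ideal_sub M J -> ideal_eq J M \/ J 1].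

Definition is_local : Prop :=
  exists M, maximal_ideal M /\ forall N, maximal_ideal N -> ideal_eq N M.

Definition is_unit (x : B) : Prop := exists y, x * y = 1.

Definition principal (t : B) : B -> Prop := fun y => exists a, y = a * t.

Definition regular (t : B) : Prop := forall x, t * x = 0 -> x = 0.

Definition strong_divisor (t : B) : Prop :=
  regular t /\ forall J, is_ideal J ->
    ideal_sub (principal t) J \/ ideal_sub J (principal t).

(* D(x) = primes not containing x;  x ~ y iff D(x) = D(y) *)
Definition equivalent (x y : B) : Prop :=
  forall P, prime_ideal P -> (~ P x <-> ~ P y).

End Ideals.

Definition ext_ideal (A B : comNzRingType) (f : A -> B) (I : A -> Prop) : B -> Prop :=
  fun y => exists n (b : 'I_n -> B) (a : 'I_n -> A),
    (forall k, I (a k)) /\ y = \sum_(k < n) b k * f (a k).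

(* B together with f : A -> B is a localization of A at the multiplicative
   set S (the usual universal characterization, which determines B up to
   unique isomorphism) *)
Definition is_localization (A B : comNzRingType) (S : A -> Prop) (f : A -> B) : Prop :=
  [/\ forall s, S s -> is_unit (f s),
      forall b, exists a s, S s /\ b * f s = f a &
      forall a, f a = 0 -> exists s, S s /\ s * a = 0].

Definition content (R : comNzRingType) (q : {poly R}) : R -> Prop :=
  fun r => exists c : nat -> R, r = \sum_(i < size q) c i * q`_i.

(* Sigma_R = { q in R[X] : c(q) = R } *)
Definition Sigma (R : comNzRingType) : {poly R} -> Prop :=
  fun q => content q 1.

Definition powers (B : comNzRingType) (g : B) : B -> Prop :=
  fun b => exists n : nat, b = g ^+ n.

(* Main.v *)
Require Import Defs.
From HB Require Import structures.
From mathcomp Require Import all_boot all_order all_algebra.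
From Stdlib Require Import Classical.
From mathcomp Require Import zify ring.
From mathcomp Require classical_sets.
From Stdlib Require Import FunctionalExtensionality PropExtensionality.
Set Implicit Arguments. Unset Strict Implicit.
Import GRing.Theory.
Local Open Scope ring_scope.

Lemma ex_max (Q : nat -> Prop) (n : nat) :
  (exists k, Q k) -> (forall k, Q k -> (k < n)%N) ->
  exists k, Q k /\ forall j, (k < j)%N -> ~ Q j.
Proof.
elim: n => [|n IH] [k Qk] Hb; first by have := Hb k Qk.
case: (classic (Q n)) => Qn.
  exists n; split => // j nj Qj; have := Hb j Qj; rewrite ltnS leqNgt nj //.
apply: IH; first by exists k.
move=> j Qj; have := Hb j Qj; rewrite ltnS leq_eqVlt => /orP[/eqP Ej|//].
by rewrite Ej in Qj.
Qed.

Lemma local_nonunit (R : comNzRingType) (M : R -> Prop) :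
  maximal_ideal M -> (forall N, maximal_ideal N -> ideal_eq N M) ->
  forall x, ~ is_unit x -> M x.
Proof.
move=> HM Huniq x Hx.
pose P := fun (A : R -> Prop) => A = (fun _ => False) \/ [/\ is_ideal A, ~ A 1 & A x].
have Pch : forall F : (R -> Prop) -> Prop, (forall A, F A -> P A) ->
    (forall A B, F A -> F B -> (forall t, A t -> B t) \/ (forall t, B t -> A t)) ->
    P (classical_sets.bigcup F id).
  move=> F FP Ftot.
  case: (classic (exists A0, F A0 /\ [/\ is_ideal A0, ~ A0 1 & A0 x])) => [[A0 [FA0 [IA0 NA01 A0x]]]|Hno].
    have memI : forall A y, F A -> A y -> [/\ is_ideal A, ~ A 1 & A x].
      by move=> A y FA Ay; case: (FP A FA) => // EA; rewrite EA in Ay.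
    right; split.
    - split.
      + by exists A0; [| case: IA0].
      + move=> a b [A FA Aa] [A' FA' A'b].
        case: (Ftot A A' FA FA') => sub.
          exists A' => //; have [[_ HD _] _ _] := memI A' b FA' A'b; exact: HD (sub _ Aa) A'b.
        exists A => //; have [[_ HD _] _ _] := memI A a FA Aa; exact: HD Aa (sub _ A'b).
      + move=> a b [A FA Ab]; exists A => //; have [[_ _ HM'] _ _] := memI A b FA Ab; exact: HM'.
    - by move=> [A FA A1]; have [_ H1 _] := memI A 1 FA A1.
    - by exists A0.
  left; apply: functional_extensionality => y; apply: propositional_extensionality; split => // [[A FA Ay]].
  apply: Hno; exists A; split => //; case: (FP A FA) => // EA; by rewrite EA in Ay.
have [A [PA Amax]] := @classical_sets.Zorn_bigcup R P (fun F h1 h2 => Pch F h1 h2).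
have Px : P (principal x).
  right; split.
  - split; first by exists 0; rewrite mul0r.
    + by move=> a b [c ->] [d ->]; exists (c + d); rewrite mulrDl.
    + by move=> a b [c ->]; exists (a * c); rewrite mulrA.
  - by move=> [a Ea]; apply: Hx; exists a; rewrite mulrC Ea.
  - by exists 1; rewrite mul1r.
case: PA => [EA|[IA NA1 Ax]].
  exfalso; apply: (Amax (principal x)) => //; rewrite EA; split; first by move=> t [].
  by move=> /(_ x); apply; exists 1; rewrite mul1r.
have MA : maximal_ideal A.
  split => // J IJ sub; case: (classic (J 1)) => J1; [by right|left].
  have PJ : P J by right; split => //; apply: sub.
  move=> y; split; last by apply: sub.
  move=> Jy; apply: NNPP => Ay; apply: (Amax J) => //; split; first exact: sub.
  by move=> /(_ y Jy).
by apply/(Huniq A MA).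
Qed.


Lemma id0 (R : comNzRingType) (N : R -> Prop) : is_ideal N -> N 0.
Proof. by case. Qed.
Lemma idD (R : comNzRingType) (N : R -> Prop) x y : is_ideal N -> N x -> N y -> N (x + y).
Proof. by case=> _ H _; apply: H. Qed.
Lemma idM (R : comNzRingType) (N : R -> Prop) a x : is_ideal N -> N x -> N (a * x).
Proof. by case=> _ _ H; apply: H. Qed.
Lemma idMr (R : comNzRingType) (N : R -> Prop) a x : is_ideal N -> N x -> N (x * a).
Proof. by move=> I Nx; rewrite mulrC; apply: idM. Qed.
Lemma idN (R : comNzRingType) (N : R -> Prop) x : is_ideal N -> N x -> N (- x).
Proof. by move=> I Nx; rewrite -mulN1r; apply: idM. Qed.
Lemma idB (R : comNzRingType) (N : R -> Prop) x y : is_ideal N -> N x -> N y -> N (x - y).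
Proof. by move=> I Nx Ny; apply: idD => //; apply: idN. Qed.
Lemma idS (R : comNzRingType) (N : R -> Prop) (I : Type) (r : seq I) (P : pred I) (F : I -> R) :
  is_ideal N -> (forall i, P i -> N (F i)) -> N (\sum_(i <- r | P i) F i).
Proof.
move=> IN H; apply: (big_ind N) => //; [exact: id0 | by move=> ? ? ? ?; apply: idD].
Qed.

Lemma maxtrick (R : comNzRingType) (N K : R -> Prop) (p g : {poly R}) :
  is_ideal N -> K 0 -> (forall j y, K y -> N (p`_j * y)) ->
  (forall x y, ~ K y -> N (x * y) -> N x) -> (exists m, ~ K g`_m) ->
  (forall i, N (p * g)`_i) -> forall k, N p`_k.
Proof.
move=> IN K0 Hi Hiii [m0 Hm0] Hpg k; apply: NNPP => Nk.
have [k1 [Nk1 k1max]] : exists k, ~ N p`_k /\ forall j, (k < j)%N -> ~ ~ N p`_j.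
  apply: (@ex_max (fun k => ~ N p`_k) (size p)); first by exists k.
  move=> j Nj; rewrite ltnNge; apply/negP => Hs; apply: Nj; rewrite nth_default //; exact: id0.
have [m [Km mmax]] : exists m, ~ K g`_m /\ forall j, (m < j)%N -> ~ ~ K g`_j.
  apply: (@ex_max (fun k => ~ K g`_k) (size g)); first by exists m0.
  move=> j Nj; rewrite ltnNge; apply/negP => Hs; apply: Nj; rewrite nth_default //.
apply: Nk1; apply: (Hiii _ g`_m Km).
have := Hpg (k1 + m)%N; rewrite coefM.
have lt : (k1 < (k1 + m).+1)%N by rewrite ltnS leq_addr.
rewrite (bigD1 (Ordinal lt)) //= addKn => HS.
have HR : N (\sum_(i < (k1 + m).+1 | i != Ordinal lt) p`_i * g`_(k1 + m - i)).
  apply: idS => // -[j jlt] /= /negbTE; rewrite -val_eqE /= => jne.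
  case: (ltngtP j k1) => [jk|kj|ejk]; last by rewrite ejk eqxx in jne.
  - apply: Hi; apply: NNPP; apply: mmax.
    lia.
  - by apply: idMr => //; apply: NNPP; apply: k1max.
by have := idB IN HS HR; rewrite addrK.
Qed.

Definition MIn (R : comNzRingType) (M : R -> Prop) (n : nat) (a : nat -> R) (x : R) :=
  exists m : nat -> R, (forall l, M (m l)) /\ x = \sum_(l < n) m l * a l.

Lemma MIn_ideal (R : comNzRingType) (M : R -> Prop) n a : is_ideal M -> is_ideal (MIn M n a).
Proof.
move=> IM; split.
- exists (fun _ => 0); split; first by move=> _; exact: id0.
  by rewrite big1 // => i _; rewrite mul0r.
- move=> x y [m1 [H1 ->]] [m2 [H2 ->]]; exists (fun l => m1 l + m2 l); split.
    by move=> l; apply: idD.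
  by rewrite -big_split /=; apply: eq_bigr => i _; rewrite mulrDl.
- move=> r x [m1 [H1 ->]]; exists (fun l => r * m1 l); split.
    by move=> l; apply: idM.
  by rewrite mulr_sumr; apply: eq_bigr => i _; rewrite mulrA.
Qed.

Lemma nakayama (R : comNzRingType) (M : R -> Prop) :
  is_ideal M -> (forall m, M m -> is_unit (1 - m)) ->
  forall n (a : nat -> R), (forall k, (k < n)%N -> MIn M n a (a k)) ->
  forall k, (k < n)%N -> a k = 0.
Proof.
move=> IM Hu n a; elim: n => [//|n IH] H.
have [m [Mm Em]] := H n (ltnSn n).
rewrite big_ord_recr /= in Em.
have [u Hu1] := Hu _ (Mm n).
have Ean : a n = \sum_(l < n) (u * m l) * a l.
  have : (1 - m n) * a n = \sum_(i < n) m i * a i.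
    by rewrite mulrBl mul1r {1}Em addrK.
  move=> /(congr1 (fun z => u * z)); rewrite mulrA (mulrC u) Hu1 mul1r => ->.
  by rewrite mulr_sumr; apply: eq_bigr => i _; rewrite mulrA.
have MIan : MIn M n a (a n).
  by exists (fun l => u * m l); split => // l; apply: idM.
have IH' : forall k, (k < n)%N -> a k = 0.
  apply: IH => k kn.
  have [m' [Mm' Em']] := H k (ltnW kn).
  rewrite big_ord_recr /= in Em'; rewrite Em'.
  apply: idD; first exact: MIn_ideal.
    by exists m'.
  by apply: idM => //; exact: MIn_ideal.
move=> k; rewrite ltnS leq_eqVlt => /orP[/eqP ->|]; last exact: IH'.
by rewrite Ean big1 // => i _; rewrite IH' // mulr0.
Qed.

Lemma content_ideal (R : comNzRingType) (p : {poly R}) : is_ideal (content p).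
Proof.
split.
- by exists (fun _ => 0); rewrite big1 // => i _; rewrite mul0r.
- move=> x y [c1 ->] [c2 ->]; exists (fun i => c1 i + c2 i).
  by rewrite -big_split /=; apply: eq_bigr => i _; rewrite mulrDl.
- move=> a x [c ->]; exists (fun i => a * c i).
  by rewrite mulr_sumr; apply: eq_bigr => i _; rewrite mulrA.
Qed.

Lemma content_coef (R : comNzRingType) (p : {poly R}) k : content p p`_k.
Proof.
case: (ltnP k (size p)) => kp; last first.
  by rewrite nth_default //; apply: id0; apply: content_ideal.
exists (fun i => if i == k then 1 else 0).
rewrite (bigD1 (Ordinal kp)) //= eqxx mul1r big1 ?addr0 // => -[i ilt] /=.
by rewrite -val_eqE /= => /negbTE ->; rewrite mul0r.
Qed.

Lemma content_sub (R : comNzRingType) (p : {poly R}) (N : R -> Prop) :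
  is_ideal N -> (forall k, N p`_k) -> ideal_sub (content p) N.
Proof.
move=> IN H x [c ->]; apply: idS => // i _; exact: idM.
Qed.

Lemma polyid_mull (R : comNzRingType) (N : R -> Prop) (h q : {poly R}) :
  is_ideal N -> (forall i, N q`_i) -> forall i, N (h * q)`_i.
Proof. by move=> IN H i; rewrite coefM; apply: idS => // j _; apply: idM. Qed.

Lemma polyid_mulr (R : comNzRingType) (N : R -> Prop) (h q : {poly R}) :
  is_ideal N -> (forall i, N q`_i) -> forall i, N (q * h)`_i.
Proof. by move=> IN H i; rewrite mulrC; apply: polyid_mull. Qed.

Lemma sigma_cancel (R : comNzRingType) (N : R -> Prop) (g : {poly R}) r :
  is_ideal N -> Sigma g -> (forall i, N (r * g`_i)) -> N r.
Proof.
move=> IN [c Ec] H; rewrite -[r]mulr1 Ec mulr_sumr; apply: idS => // i _.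
by rewrite mulrCA; apply: idM.
Qed.

Lemma unitcoef_sigma (R : comNzRingType) (s : {poly R}) i : is_unit s`_i -> Sigma s.
Proof.
move=> [u Hu]; case: (ltnP i (size s)) => ilt; last first.
  by move: Hu; rewrite nth_default // mul0r => /eqP; rewrite eq_sym oner_eq0.
exists (fun k => if k == i then u else 0).
rewrite (bigD1 (Ordinal ilt)) //= eqxx mulrC Hu big1 ?addr0 // => -[k klt] /=.
by rewrite -val_eqE /= => /negbTE ->; rewrite mul0r.
Qed.

Lemma sigma1 (R : comNzRingType) : Sigma (1 : {poly R}).
Proof. by apply: (@unitcoef_sigma _ _ 0); exists 1; rewrite coefC /= mulr1. Qed.

Lemma unit_notin (R : comNzRingType) (M : R -> Prop) x :
  is_ideal M -> ~ M 1 -> is_unit x -> ~ M x.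
Proof. by move=> IM M1 [u Hu] Mx; apply: M1; rewrite -Hu; apply: idMr. Qed.

Lemma sigma_unitcoef (R : comNzRingType) (M : R -> Prop) (s : {poly R}) :
  is_ideal M -> ~ M 1 -> (forall x, ~ is_unit x -> M x) ->
  Sigma s -> exists i, is_unit s`_i.
Proof.
move=> IM M1 HL Hs; apply: NNPP => Hn; apply: M1.
apply: (content_sub IM) Hs => k; apply: HL => Hu; apply: Hn; by exists k.
Qed.

Lemma sigma_mul (R : comNzRingType) (M : R -> Prop) (g h : {poly R}) :
  is_ideal M -> ~ M 1 -> (forall x, ~ is_unit x -> M x) ->
  Sigma g -> Sigma h -> Sigma (g * h).
Proof.
move=> IM M1 HL Hg Hh; apply: NNPP => Hn.
have Hall : forall i, M (g * h)`_i.
  by move=> i; apply: HL => Hu; apply: Hn; apply: unitcoef_sigma Hu.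
have [i Hi] := sigma_unitcoef IM M1 HL Hg.
apply: (unit_notin IM M1 Hi).
apply: (@maxtrick _ M M g h) => //.
- exact: id0.
- by move=> j y My; apply: idM.
- move=> x y Ny Mxy; have [u Hu] : is_unit y by apply: NNPP => /HL.
  by rewrite -[x]mulr1 -Hu mulrA; apply: idMr.
- have [j Hj] := sigma_unitcoef IM M1 HL Hh; exists j; exact: unit_notin.
Qed.

Lemma loc_eq (A B : comNzRingType) (S : A -> Prop) (f : {rmorphism A -> B}) a b :
  is_localization S f -> f a = f b -> exists s, S s /\ s * a = s * b.
Proof.
move=> [_ _ H3] E; have [s [Ss Hs]] : exists s, S s /\ s * (a - b) = 0.
  by apply: H3; rewrite rmorphB E subrr.
by exists s; split => //; apply/eqP; rewrite -subr_eq0 -mulrBr Hs.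
Qed.

Lemma contract (R B : comNzRingType) (M : R -> Prop) (f : {rmorphism {poly R} -> B})
  (N : R -> Prop) (x s q : {poly R}) :
  is_ideal M -> ~ M 1 -> (forall x, ~ is_unit x -> M x) ->
  is_localization (@Sigma R) f -> is_ideal N -> Sigma s -> (forall i, N q`_i) ->
  f x * f s = f q -> exists g, Sigma g /\ forall i, N (x * g)`_i.
Proof.
move=> IM M1 HL Hloc IN Hs Hq E.
have [s' [Hs' E']] := loc_eq Hloc (etrans (rmorphM f x s) E).
exists (s * s'); split; first exact: (sigma_mul IM M1 HL).
by move=> i; rewrite mulrA (mulrC _ s') E'; apply: polyid_mull.
Qed.

Lemma contract_const (R B : comNzRingType) (M : R -> Prop) (f : {rmorphism {poly R} -> B})
  (N : R -> Prop) (r : R) (s q : {poly R}) :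
  is_ideal M -> ~ M 1 -> (forall x, ~ is_unit x -> M x) ->
  is_localization (@Sigma R) f -> is_ideal N -> Sigma s -> (forall i, N q`_i) ->
  f r%:P * f s = f q -> N r.
Proof.
move=> IM M1 HL Hloc IN Hs Hq E.
have [g [Hg Hgi]] := contract IM M1 HL Hloc IN Hs Hq E.
by apply: (sigma_cancel IN Hg) => i; rewrite -coefCM.
Qed.

Lemma principal_ideal (R : comNzRingType) (x : R) : is_ideal (principal x).
Proof.
split; first by exists 0; rewrite mul0r.
- by move=> a b [c ->] [d ->]; exists (c + d); rewrite mulrDl.
- by move=> a b [c ->]; exists (a * c); rewrite mulrA.
Qed.

Lemma claimA (R B : comNzRingType) (M : R -> Prop) (f : {rmorphism {poly R} -> B}) r x b :
  is_ideal M -> ~ M 1 -> (forall x, ~ is_unit x -> M x) ->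
  is_localization (@Sigma R) f -> f r%:P = b * f x%:P -> principal x r.
Proof.
move=> IM M1 HL Hloc E.
have [_ H2 _] := Hloc; have [q [s [Hs Eb]]] := H2 b.
apply: (contract_const IM M1 HL Hloc (principal_ideal x) Hs (q := q * x%:P)).
  by move=> i; rewrite coefMC; exists q`_i.
by rewrite E rmorphM -Eb mulrAC.
Qed.

Lemma MIp_coef (R : comNzRingType) (M : R -> Prop) (p : {poly R}) j y :
  is_ideal M -> M y -> MIn M (size p) (fun k => p`_k) (p`_j * y).
Proof.
move=> IM My; case: (ltnP j (size p)) => jlt; last first.
  by rewrite nth_default // mul0r; apply: id0; apply: MIn_ideal.
exists (fun l => if l == j then y else 0); split.
  by move=> l; case: eqP => // _; exact: id0.
rewrite (bigD1 (Ordinal jlt)) //= eqxx mulrC big1 ?addr0 // => -[k klt] /=.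
by rewrite -val_eqE /= => /negbTE ->; rewrite mul0r.
Qed.

Lemma expand_f (R B : comNzRingType) (f : {rmorphism {poly R} -> B}) (p : {poly R}) :
  f p = \sum_(k < size p) f 'X^k * f (p`_k)%:P.
Proof.
rewrite -{1}(coefK p) poly_def raddf_sum; apply: eq_bigr => i _.
rewrite -mul_polyC.
exact: (etrans (rmorphM f _ _) (mulrC _ _)).
Qed.

Lemma one_minus_unit (R : comNzRingType) (M : R -> Prop) :
  is_ideal M -> ~ M 1 -> (forall x, ~ is_unit x -> M x) ->
  forall m, M m -> is_unit (1 - m).
Proof.
move=> IM M1 HL m Mm; apply: NNPP => /HL H; apply: M1.
by rewrite -(subrK m 1); apply: idD.
Qed.

Lemma nonunit_num (R B : comNzRingType) (M : R -> Prop) (f : {rmorphism {poly R} -> B}) b s q :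
  is_ideal M -> ~ M 1 -> (forall x, ~ is_unit x -> M x) ->
  is_localization (@Sigma R) f -> ~ is_unit b -> Sigma s -> b * f s = f q ->
  forall i, M q`_i.
Proof.
move=> IM M1 HL [H1 _ _] Hb Hs E i; apply: HL => Hu.
have [w Hw] := H1 q (unitcoef_sigma Hu).
by apply: Hb; exists (f s * w); rewrite mulrA E.
Qed.

Lemma p_not_MI (R B : comNzRingType) (M : R -> Prop) (f : {rmorphism {poly R} -> B}) (p : {poly R}) :
  is_ideal M -> ~ M 1 -> (forall x, ~ is_unit x -> M x) ->
  strong_divisor (f p) -> ~ (forall k, MIn M (size p) (fun k => p`_k) p`_k).
Proof.
move=> IM M1 HL [Hreg _] H.
have Hz := @nakayama _ M IM (one_minus_unit IM M1 HL) (size p) (fun k => p`_k) (fun k _ => H k).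
have p0 : p = 0.
  apply/polyP => k; rewrite coef0; case: (ltnP k (size p)) => kp; first exact: Hz.
  by rewrite nth_default.
have := Hreg 1; rewrite p0 rmorph0 mul0r => /(_ erefl) /eqP.
by rewrite oner_eq0.
Qed.

Lemma beta (R B : comNzRingType) (M : R -> Prop) (f : {rmorphism {poly R} -> B}) (p : {poly R}) k u :
  is_ideal M -> ~ M 1 -> (forall x, ~ is_unit x -> M x) ->
  is_localization (@Sigma R) f -> strong_divisor (f p) ->
  f p = u * f (p`_k)%:P -> is_unit u.
Proof.
move=> IM M1 HL Hloc Hsd E; apply: NNPP => Hu.
have [_ H2 _] := Hloc; have [h0 [s [Hs Eh]]] := H2 u.
have Mh := nonunit_num IM M1 HL Hloc Hu Hs Eh.
set N := MIn M (size p) (fun k => p`_k).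
have IN : is_ideal N by apply: MIn_ideal.
have Hq : forall i, N (h0 * (p`_k)%:P)`_i.
  by move=> i; rewrite coefMC mulrC; apply: MIp_coef.
have [g [Hg Hgi]] := contract IM M1 HL Hloc IN Hs Hq
  (etrans (congr1 (fun z => z * f s) E) (etrans (mulrAC _ _ _) (etrans (congr1 (fun z => z * _) Eh) (esym (rmorphM f _ _))))).
apply: (p_not_MI IM M1 HL Hsd).
apply: (@maxtrick _ N M p g) => //.
- exact: id0.
- by move=> j y My; apply: MIp_coef.
- move=> x y Ny Nxy; have [v Hv] : is_unit y by apply: NNPP => /HL.
  by rewrite -[x]mulr1 -Hv mulrA; apply: idMr.
- have [j Hj] := sigma_unitcoef IM M1 HL Hg; exists j; exact: unit_notin.
Qed.

Lemma allin (R B : comNzRingType) (M : R -> Prop) (f : {rmorphism {poly R} -> B}) (p : {poly R}) k :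
  is_ideal M -> ~ M 1 -> (forall x, ~ is_unit x -> M x) ->
  is_localization (@Sigma R) f -> strong_divisor (f p) ->
  principal (f p) (f (p`_k)%:P).
Proof.
move=> IM M1 HL Hloc Hsd; have [_ Hcmp] := Hsd.
case: (Hcmp _ (principal_ideal (f (p`_k)%:P))) => H.
  have [u Hu] := H (f p) (ex_intro _ 1 (esym (mul1r _))).
  have [w Hw] := beta IM M1 HL Hloc Hsd Hu.
  by exists w; rewrite Hu mulrA (mulrC w) Hw mul1r.
by apply: H; exists 1; rewrite mul1r.
Qed.

Lemma alpha (R B : comNzRingType) (M : R -> Prop) (f : {rmorphism {poly R} -> B}) (p : {poly R}) k v :
  is_ideal M -> ~ M 1 -> (forall x, ~ is_unit x -> M x) ->
  is_localization (@Sigma R) f ->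
  f (p`_k)%:P = v * f p -> ~ is_unit v -> MIn M (size p) (fun k => p`_k) p`_k.
Proof.
move=> IM M1 HL Hloc E Hv.
have [_ H2 _] := Hloc; have [w [s [Hs Ew]]] := H2 v.
have Mw := nonunit_num IM M1 HL Hloc Hv Hs Ew.
have IN := @MIn_ideal _ M (size p) (fun k => p`_k) IM.
apply: (contract_const IM M1 HL Hloc IN Hs (q := w * p)).
  move=> i; rewrite coefM; apply: idS => // j _; rewrite mulrC; exact: MIp_coef.
by rewrite E -mulrA (mulrC (f p)) mulrA Ew (rmorphM f).
Qed.

Lemma exists_j (R B : comNzRingType) (M : R -> Prop) (f : {rmorphism {poly R} -> B}) (p : {poly R}) :
  is_ideal M -> ~ M 1 -> (forall x, ~ is_unit x -> M x) ->
  is_localization (@Sigma R) f -> strong_divisor (f p) ->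
  exists j v, f (p`_j)%:P = v * f p /\ is_unit v.
Proof.
move=> IM M1 HL Hloc Hsd; apply: NNPP => Hn.
apply: (p_not_MI IM M1 HL Hsd) => k.
have [v Hv] := allin k IM M1 HL Hloc Hsd.
apply: (alpha IM M1 HL Hloc Hv) => Hu; apply: Hn; by exists k, v.
Qed.

Definition locQ (A C : comNzRingType) (S : A -> Prop) (h : A -> C) (P' : A -> Prop) : C -> Prop :=
  fun c => exists w q, [/\ S w, P' q & c * h w = h q].

Lemma locQ_ideal (A C : comNzRingType) (S : A -> Prop) (h : {rmorphism A -> C}) (P' : A -> Prop) :
  is_localization S h -> S 1 -> (forall x y, S x -> S y -> S (x * y)) -> is_ideal P' ->
  is_ideal (locQ S h P').
Proof.
move=> [_ H2 _] S1 SM IP; split.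
- by exists 1, 0; split => //; [exact: id0 | rewrite mul0r rmorph0].
- move=> x y [w1 [q1 [S1' P1 E1]]] [w2 [q2 [S2 P2 E2]]].
  exists (w1 * w2), (q1 * w2 + q2 * w1); split; first exact: SM.
    by apply: (idD IP); apply: (idMr _ IP).
  rewrite rmorphD !rmorphM -E1 -E2 mulrDl; congr (_ + _); first by rewrite mulrA.
  by rewrite (mulrC (h w1)) mulrA.
- move=> a x [w [q [Sw Pq E]]]; have [b [s [Ss Eb]]] := H2 a.
  exists (s * w), (b * q); split; first exact: SM.
    exact: idM.
  by rewrite !rmorphM -E -Eb mulrACA.
Qed.

Lemma locQ_img (A C : comNzRingType) (S : A -> Prop) (h : {rmorphism A -> C}) (P' : A -> Prop) a :
  S 1 -> P' a -> locQ S h P' (h a).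
Proof. by move=> S1 Pa; exists 1, a; split => //; rewrite rmorph1 mulr1. Qed.

Lemma locQ_contr (A C : comNzRingType) (S : A -> Prop) (h : {rmorphism A -> C}) (P' : A -> Prop) a :
  is_localization S h -> (forall x y, S x -> S y -> S (x * y)) -> prime_ideal P' ->
  (forall s, S s -> ~ P' s) -> locQ S h P' (h a) -> P' a.
Proof.
move=> Hloc SM [IP _ PP] Hdis [w [q [Sw Pq E]]].
have [s [Ss Es]] := loc_eq Hloc (etrans (rmorphM h a w) E).
have : P' ((s * w) * a) by rewrite -mulrA (mulrC w) Es; apply: idM.
by case/PP => // /(Hdis _ (SM _ _ Ss Sw)).
Qed.

Lemma locQ_prime (A C : comNzRingType) (S : A -> Prop) (h : {rmorphism A -> C}) (P' : A -> Prop) :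
  is_localization S h -> S 1 -> (forall x y, S x -> S y -> S (x * y)) -> prime_ideal P' ->
  (forall s, S s -> ~ P' s) -> prime_ideal (locQ S h P').
Proof.
move=> Hloc S1 SM HP Hdis; have [IP _ PP] := HP; have [_ H2 _] := Hloc.
split; first exact: locQ_ideal.
- rewrite -(rmorph1 h) => /(locQ_contr Hloc SM HP Hdis) P1.
  by apply: (Hdis 1 S1).
- move=> x y [w [q [Sw Pq E]]].
  have [b1 [w1 [S1' E1]]] := H2 x; have [b2 [w2 [S2 E2]]] := H2 y.
  have E' : h (b1 * b2 * w) = h (q * (w1 * w2)).
    by rewrite !rmorphM -E1 -E2 -E; ring.
  have [s [Ss Es]] := loc_eq Hloc E'.
  have : P' (s * w * (b1 * b2)).
    have -> : s * w * (b1 * b2) = s * (b1 * b2 * w) by ring.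
    by rewrite Es; apply: idM => //; apply: idMr.
  case/PP; first by case/PP => [/(Hdis _ Ss)|/(Hdis _ Sw)].
  case/PP => Pb; [left; exists w1, b1 | right; exists w2, b2]; by split.
Qed.

Definition polyI (R : comNzRingType) (J : R -> Prop) : {poly R} -> Prop :=
  fun q => forall i, J q`_i.

Lemma polyI_ideal (R : comNzRingType) (J : R -> Prop) : is_ideal J -> is_ideal (polyI J).
Proof.
move=> IJ; split.
- by move=> i; rewrite coef0; exact: id0.
- by move=> x y Hx Hy i; rewrite coefD; apply: idD.
- by move=> a x Hx; apply: polyid_mull.
Qed.

Lemma polyI_C (R : comNzRingType) (J : R -> Prop) r : is_ideal J -> J r -> polyI J r%:P.
Proof. by move=> IJ Jr i; rewrite coefC; case: eqP => // _; exact: id0. Qed.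

Lemma polyI_prime (R : comNzRingType) (P : R -> Prop) : prime_ideal P -> prime_ideal (polyI P).
Proof.
move=> [IP P1 PP]; split; first exact: polyI_ideal.
- by move=> /(_ 0%N); rewrite coefC.
- move=> x y Hxy; case: (classic (polyI P y)) => Hy; [by right | left].
  apply: (@maxtrick _ P P x y) => //.
  + exact: id0.
  + by move=> j z Pz; apply: idM.
  + by move=> a b Pb /PP [].
  + by apply: NNPP => Hn; apply: Hy => i; apply: NNPP => Hi; apply: Hn; exists i.
Qed.

Lemma comp_loc (R B C : comNzRingType) (f : {rmorphism {poly R} -> B})
  (g : {rmorphism B -> C}) (p : {poly R}) :
  is_localization (@Sigma R) f -> is_localization (powers (f p)) g ->
  is_localization (fun w => exists s n, Sigma s /\ w = s * p ^+ n) (g \o f).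
Proof.
move=> [F1 F2 F3] [G1 G2 G3]; split.
- move=> w [s [n [Hs ->]]]; rewrite /= !rmorphM !rmorphXn.
  have [a Ha] := F1 s Hs; have [b Hb] := G1 (f p) (ex_intro _ 1%N (esym (expr1 _))).
  exists (g a * b ^+ n); rewrite mulrACA -rmorphM Ha rmorph1 mul1r -exprMn Hb expr1n //.
- move=> c; have [b [t [[n ->] Eb]]] := G2 c; have [a [s [Hs Ea]]] := F2 b.
  exists a, (s * p ^+ n); split; first by exists s, n.
  by rewrite /= (rmorphM f) (rmorphXn f) (rmorphM g) mulrCA Eb mulrC -(rmorphM g) Ea.
- move=> a /= Ha; have [t [[n ->] Et]] := G3 _ Ha.
  have : f (p ^+ n * a) = 0 by rewrite rmorphM rmorphXn.
  move=> /F3 [s [Hs Es]]; exists (s * p ^+ n); split; first by exists s, n.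
  by rewrite -mulrA.
Qed.

Lemma zero_ideal (R : comNzRingType) : is_ideal (fun z : R => z = 0).
Proof. by split => // [x y -> ->|a x ->]; rewrite ?addr0 ?mulr0. Qed.

Unset Implicit Arguments. Set Strict Implicit.

(* B with f plays the role of R(X) = R[X]_{Sigma_R};  f p = p(X)/1. *)
Theorem mainTheorem15 (R : comNzRingType) (p : {poly R})
    (B : comNzRingType) (f : {rmorphism {poly R} -> B}) :
  is_local R ->
  is_localization (@Sigma R) f ->
  strong_divisor (f p) -> ~ is_unit (f p) ->
  [/\ ideal_eq (ext_ideal (fun r : R => f r%:P) (content p)) (principal (f p)),
      (exists rho : R, [/\ strong_divisor rho,
                           ideal_eq (content p) (principal rho) &
                           equivalent (f p) (f rho%:P)]),
      (forall i : nat, principal (f (p`_i)%:P) (f p) ->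
                       ideal_eq (content p) (principal p`_i)) &
      (forall (C : comNzRingType) (g : {rmorphism B -> C}),
         is_localization (powers (f p)) g ->
         forall P : R -> Prop,
           (exists Q : C -> Prop, prime_ideal Q /\
                ideal_eq P (fun r => Q (g (f r%:P))))
           <-> (prime_ideal P /\ ~ ideal_sub (content p) P))].
Proof.
move=> [M [HMmax Huniq]] Hloc Hsd Hnu.
have [IM M1 _] := HMmax; have HL := local_nonunit HMmax Huniq.
have G3 : forall i, principal (f (p`_i)%:P) (f p) -> ideal_eq (content p) (principal p`_i).
  move=> i [u Hu]; have [w Hw] := @beta _ _ M f p i u IM M1 HL Hloc Hsd Hu.
  have Hk : forall k, principal p`_i p`_k.
    move=> k; have [c Hc] := allin k IM M1 HL Hloc Hsd.
    by apply: (claimA IM M1 HL Hloc (b := c * u)); rewrite Hc Hu mulrA.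
  move=> x; split; first by apply: (content_sub (principal_ideal _) Hk).
  by move=> [a ->]; apply: idM; [exact: content_ideal | exact: content_coef].
have [j [v [Ev Hv]]] := exists_j IM M1 HL Hloc Hsd.
have [w Hw] := Hv. have [Hreg Hcmp] := Hsd.
have Efp : f p = w * f (p`_j)%:P by rewrite Ev mulrA (mulrC w) Hw mul1r.
split.
- move=> x; split.
  + move=> [n [b [a [Ha ->]]]]; apply: idS => [|k _]; first exact: principal_ideal.
    apply: idM; first exact: principal_ideal.
    have IN : is_ideal (fun r => principal (f p) (f r%:P)).
      split.
      * by exists 0; rewrite mul0r rmorph0.
      * by move=> a1 b1 Ha1 Hb1; rewrite polyCD rmorphD; apply: idD => //; exact: principal_ideal.
      * by move=> a1 b1 Hb1; rewrite polyCM rmorphM; apply: idM => //; exact: principal_ideal.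
    apply: (content_sub IN) (Ha k) => k'; exact: (allin k' IM M1 HL Hloc Hsd).
  + move=> [a ->]; exists (size p), (fun k => a * f 'X^k), (fun k => p`_k); split.
      by move=> k; apply: content_coef.
    by rewrite {1}(expand_f f p) mulr_sumr; apply: eq_bigr => k _; rewrite mulrA.
- exists p`_j; split.
  + split.
    * move=> x Hx.
      have : f (p`_j)%:P * f x%:P = 0 by rewrite -rmorphM -polyCM Hx rmorph0.
      rewrite Ev (mulrC v) -mulrA => /Hreg /(congr1 (fun z => w * z)).
      rewrite mulrA (mulrC w) Hw mul1r mulr0.
      have [_ _ F3] := Hloc; move=> /F3 [s [Hs Es]].
      apply: (sigma_cancel (zero_ideal R) Hs) => i.
      by rewrite mulrC -coefMC Es coef0.
    * move=> J IJ; set J' := locQ (@Sigma R) f (polyI J).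
      have IJ' : is_ideal J' :=
        locQ_ideal Hloc (sigma1 R) (fun x y => sigma_mul IM M1 HL) (polyI_ideal IJ).
      case: (Hcmp J' IJ') => H; [left|right].
      -- move=> y [a ->]; apply: idM; first exact: IJ.
         have : J' (f (p`_j)%:P) by apply: H; exists v.
         move=> [s [q [Hs Hq E]]]; exact: (contract_const IM M1 HL Hloc IJ Hs Hq E).
      -- move=> y Jy; have [c Hc] := H _ (locQ_img f (sigma1 R) (polyI_C IJ Jy)).
         by apply: (claimA IM M1 HL Hloc (b := c * w)); rewrite Hc Efp mulrA.
  + apply: G3; by exists w.
  + move=> P [IP _ _]; split => HnP HP; apply: HnP.
    * by rewrite Efp; apply: idM.
    * by rewrite Ev; apply: idM.
- exact: G3.
- move=> C g Hg P; split.
  + move=> [Q [[IQ Q1 PQ] HPQ]]; split.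
    * split; [split|..].
      -- by apply/HPQ; rewrite polyC0 !rmorph0; exact: id0.
      -- by move=> a b /HPQ Ha /HPQ Hb; apply/HPQ; rewrite polyCD !rmorphD; apply: idD.
      -- by move=> a b /HPQ Hb; apply/HPQ; rewrite polyCM !rmorphM; apply: idM.
      -- by move=> /HPQ; rewrite polyC1 !rmorph1.
      -- by move=> a b /HPQ; rewrite polyCM !rmorphM => /PQ [] H; [left|right]; apply/HPQ.
    * move=> Hsub; apply: Q1.
      have [G1 _ _] := Hg.
      have [u Hu] := G1 (f p) (ex_intro _ 1%N (esym (expr1 _))).
      rewrite -Hu; apply: idMr => //.
      rewrite (expand_f f p) raddf_sum; apply: idS => // k _.
      have E := rmorphM g (f 'X^k) (f (p`_k)%:P).
      apply: (@eq_ind _ (g (f 'X^k) * g (f (p`_k)%:P)) Q _ _ (esym E)).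
      apply: idM => //; by apply/HPQ; apply: Hsub; apply: content_coef.
  + move=> [HP Hnsub]; have [IP P1 PP] := HP.
    set S' := fun w : {poly R} => exists s n, Sigma s /\ w = s * p ^+ n.
    have S1 : S' 1 by exists 1, 0%N; rewrite expr0 mulr1; split => //; exact: sigma1.
    have SM : forall x y, S' x -> S' y -> S' (x * y).
      move=> _ _ [s1 [n1 [H1 ->]]] [s2 [n2 [H2 ->]]]; exists (s1 * s2), (n1 + n2)%N; split.
        exact: (sigma_mul IM M1 HL).
      by rewrite exprD; ring.
    have HPX := polyI_prime HP; have [IPX PX1 PPX] := HPX.
    have Hdis : forall s, S' s -> ~ polyI P s.
      move=> _ [s [n [Hs ->]]]; case/PPX => [Ps|].
        by apply: P1; apply: (content_sub IP Ps).
      elim: n => [|n IHn]; first by rewrite expr0.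
      rewrite exprS; case/PPX => // Pp; apply: Hnsub; exact: (content_sub IP Pp).
    have Hcl := comp_loc Hloc Hg.
    exists (locQ S' (g \o f) (polyI P)); split.
      exact: locQ_prime.
    move=> r; split.
      by move=> Pr; exact: (locQ_img (g \o f) S1 (polyI_C IP Pr)).
    move=> H; have := locQ_contr Hcl SM HPX Hdis H.
    by move=> /(_ 0%N); rewrite coefC.
Qed.
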